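(* Let $n>1$ be an integer and let $j_0,\dots,j_{n-1}\in\mathbb Z/(n)$ (indices read in $\mathbb Z/(n)$) satisfy $j_i=j_{-i}$ for all $i$, such that for every nonzero $i\in\mathbb Z/(n)$ there exists $k\in\mathbb Z/(n)$ with $j_{i+k}\neq j_k$, and such that the additive subgroup generated by $j_0,\dots,j_{n-1}$ is $\mathbb Z/(n)$. Define $\sigma_{(i,j)}(k,l)=(k+j,\ l-j_{k+j-i})$ on $(\mathbb Z/(n))^2$ and $r((i,j),(k,l))=(\sigma_{(i,j)}(k,l),\sigma^{-1}_{\sigma_{(i,j)}(k,l)}(i,j))$. Then $((\mathbb Z/(n))^2,r)$ is an indecomposable and irretractable solution of the YBE. If moreover $j_0-j_i$ is invertible in $\mathbb Z/(n)$ for every nonzero $i$, then $((\mathbb Z/(n))^2,r)$ is a simple solution of the YBE.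
   Context: A solution of the YBE is a pair $(X,r)$, $X$ nonempty, $r:X\times X\to X\times X$, $r(x,y)=(\sigma_x(y),\gamma_y(x))$, with $r^2=\mathrm{id}$, all $\sigma_x,\gamma_x$ bijective, and $r_{12}r_{23}r_{12}=r_{23}r_{12}r_{23}$ on $X^3$. Indecomposable: $\langle\sigma_x\rangle\le \mathrm{Sym}_X$ transitive on $X$. Irretractable: $\sigma_x\ne\sigma_y$ for $x\ne y$. A homomorphism of solutions $f:(X,r)\to(Y,s)$ (with $s(t,z)=(\sigma'_t(z),\gamma'_z(t))$) is a map with $f(\sigma_x(y))=\sigma'_{f(x)}(f(y))$; $(X,r)$ is simple if $|X|>1$ and every surjective homomorphism of solutions $f:(X,r)\to(Y,s)$ is bijective or has $|Y|=1$. *)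

(* Defs.v *)
From mathcomp Require Import all_boot all_order fingroup perm all_algebra.
Set Implicit Arguments. Unset Strict Implicit. Unset Printing Implicit Defensive.
Import GRing.Theory.

Section YBE.
Variable X : Type.
Variable r : X * X -> X * X.

Definition ysigma (x : X) : X -> X := fun y => (r (x, y)).1.
Definition ygamma (y : X) : X -> X := fun x => (r (x, y)).2.

Definition r12 (t : X * X * X) : X * X * X :=
  let: (x, y, z) := t in let: (a, b) := r (x, y) in (a, b, z).
Definition r23 (t : X * X * X) : X * X * X :=
  let: (x, y, z) := t in let: (b, c) := r (y, z) in (x, b, c).

Definition is_solution : Prop :=
  [/\ (forall p, r (r p) = p),
      (forall x, bijective (ysigma x)),
      (forall x, bijective (ygamma x)) &
      (forall t, r12 (r23 (r12 t)) = r23 (r12 (r23 t)))].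

(* the subgroup of Sym_X generated by the sigma_x:
   smallest set of maps containing id, closed under left composition with
   each sigma_z and with each two-sided inverse of a sigma_z *)
Inductive in_sigma_group : (X -> X) -> Prop :=
| sg_id : in_sigma_group id
| sg_sigma z g : in_sigma_group g -> in_sigma_group (ysigma z \o g)
| sg_inv z h g : cancel (ysigma z) h -> cancel h (ysigma z) ->
    in_sigma_group g -> in_sigma_group (h \o g).

Definition indecomposable : Prop :=
  forall x y : X, exists2 g, in_sigma_group g & g x = y.

Definition irretractable : Prop :=
  forall x y : X, x <> y -> ysigma x <> ysigma y.
End YBE.

Definition is_sol_hom (X Y : Type) (r : X * X -> X * X) (s : Y * Y -> Y * Y)
  (f : X -> Y) : Prop :=
  forall x y, f (ysigma r x y) = ysigma s (f x) (f y).

Definition simple_solution (X : Type) (r : X * X -> X * X) : Prop :=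
  (exists x y : X, x <> y) /\
  forall (Y : Type) (s : Y * Y -> Y * Y) (f : X -> Y),
    is_solution s -> is_sol_hom r s f -> (forall y, exists x, f x = y) ->
    bijective f \/ (exists y0 : Y, forall y, y = y0).

Section Concrete.
Local Open Scope ring_scope.
Variable n : nat.
Variable a : 'Z_n -> 'Z_n.   (* a i = j_i *)

(* sigma_{(i,j)}(k,l) = (k+j, l - a(k+j-i)) *)
Definition zsig (x y : 'Z_n * 'Z_n) : 'Z_n * 'Z_n :=
  (y.1 + x.2, y.2 - a (y.1 + x.2 - x.1)).

Lemma zsig_inj x : injective (zsig x).
Proof.
move=> [k l] [k' l'] E.
have Hk : k + x.2 = k' + x.2 := congr1 fst E.
have Ek : k = k' := addIr _ Hk.
subst k'.
have Hl : l - a (k + x.2 - x.1) = l' - a (k + x.2 - x.1) := congr1 snd E.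
by rewrite (subIr _ Hl).
Qed.

Definition zsigP (x : 'Z_n * 'Z_n) : {perm 'Z_n * 'Z_n} := perm (@zsig_inj x).

Definition zr (p : ('Z_n * 'Z_n) * ('Z_n * 'Z_n)) : ('Z_n * 'Z_n) * ('Z_n * 'Z_n) :=
  (zsig p.1 p.2, ((zsigP (zsig p.1 p.2))^-1)%g p.1).
End Concrete.

(* Main.v *)
Require Import Defs.
From mathcomp Require Import all_boot all_order fingroup perm all_algebra.
From mathcomp Require Import ring.
From Stdlib Require Import Classical ClassicalEpsilon FunctionalExtensionality.
Import GRing.Theory.
Local Open Scope ring_scope.

Section S.
Variable n : nat.
Variable a : 'Z_n -> 'Z_n.
Local Notation X := ('Z_n * 'Z_n)%type.

Lemma zsigE (i j k l : 'Z_n) : zsig a (i, j) (k, l) = (k + j, l - a (k + j - i)).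
Proof. by []. Qed.

Lemma zsig_inv (x y : X) :
  ((zsigP a x)^-1)%g y = (y.1 - x.2, y.2 + a (y.1 - x.1)).
Proof.
apply: (@perm_inj _ (zsigP a x)); rewrite permKV permE /zsig /=.
rewrite subrK addrK; by case: y.
Qed.

Hypothesis hsym : forall i : 'Z_n, a i = a (- i).

Lemma zrE (i j k l : 'Z_n) : zr a ((i, j), (k, l)) =
  ((k + j, l - a (k + j - i)), (i - l + a (k + j - i), j + a (k + j - i))).
Proof.
rewrite /zr zsig_inv /=.
rewrite /zsig /=; congr (_, (_, _)); [ring | by rewrite hsym opprB].
Qed.

Lemma zr_inv p : zr a (zr a p) = p.
Proof.
case: p => x y; rewrite /zr /=.
have e : zsig a (zsig a x y) (((zsigP a (zsig a x y))^-1)%g x) = x.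
  by have := permKV (zsigP a (zsig a x y)) x; rewrite permE.
rewrite e.
by have := permK (zsigP a x) y; rewrite [zsigP a x y]permE => ->.
Qed.

Lemma r12E (x y z : X) : r12 (zr a) (x, y, z) = ((zr a (x, y)).1, (zr a (x, y)).2, z).
Proof. by rewrite /r12; case: (zr a (x, y)). Qed.
Lemma r23E (x y z : X) : r23 (zr a) (x, y, z) = (x, (zr a (y, z)).1, (zr a (y, z)).2).
Proof. by rewrite /r23; case: (zr a (y, z)). Qed.
Definition zR (p : X * X) : X * X :=
  let A := a (p.2.1 + p.1.2 - p.1.1) in
  ((p.2.1 + p.1.2, p.2.2 - A), (p.1.1 - p.2.2 + A, p.1.2 + A)).
Lemma zr_zR : zr a = zR.
Proof. apply: functional_extensionality => -[[i j] [k l]]; exact: zrE. Qed.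

Lemma zr_ybe t : r12 (zr a) (r23 (zr a) (r12 (zr a) t)) =
   r23 (zr a) (r12 (zr a) (r23 (zr a) t)).
Proof.
case: t => [[[i1 j1] [i2 j2]] [i3 j3]].
rewrite zr_zR /r12 /r23 /zR /=.
set A := a (i2 + j1 - i1).
set C := a (i3 + j2 - i2).
set B := a (i3 + j2 + j1 - i1).
have -> : i3 + (j1 + A) - (i1 - j2 + A) = i3 + j2 + j1 - i1 by ring.
have -> : i3 + (j1 + A) + (j2 - A) - (i2 + j1) = i3 + j2 - i2 by ring.
have -> : i2 - j3 + C + (j1 + B) - (i1 - (j3 - C) + B) = i2 + j1 - i1 by ring.
rewrite -/A -/B -/C.
congr (_, _, (_, _), (_, _)); ring.
Qed.

Lemma zr_gamma y : bijective (ygamma (zr a) y).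
Proof.
case: y => k l.
exists (fun p : X => let A := a (k + p.2 - p.1 - l) in (p.1 + l - A, p.2 - A)).
  move=> [i j]; rewrite /ygamma zr_zR /zR /=.
  have -> : k + (j + a (k + j - i)) - (i - l + a (k + j - i)) - l = k + j - i by ring.
  congr (_, _); ring.
move=> [p q]; rewrite /ygamma zr_zR /zR /=.
have -> : k + (q - a (k + q - p - l)) - (p + l - a (k + q - p - l)) = k + q - p - l by ring.
congr (_, _); ring.
Qed.

Lemma zr_sol : is_solution (zr a).
Proof.
split.
- exact: zr_inv.
- move=> x; exists ((zsigP a x)^-1)%g => y.
    by rewrite /ysigma /zr /= -[zsig a x y](permE (@zsig_inj n a x)) permK.
  by rewrite /ysigma /zr /= -[zsig a x _](permE (@zsig_inj n a x)) permKV.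
- exact: zr_gamma.
- exact: zr_ybe.
Qed.
End S.

Section Indec.
Variable n : nat.
Variable a : 'Z_n -> 'Z_n.
Local Notation X := ('Z_n * 'Z_n)%type.
Hypothesis hgen : (<<[set a i | i : 'Z_n]>>)%g = [set: 'Z_n].

Definition reach (x y : X) := exists2 g, in_sigma_group (zr a) g & g x = y.

Lemma reach_sig x y z : reach x y -> reach x (zsig a z y).
Proof. by case=> g Hg <-; exists (ysigma (zr a) z \o g); [exact: sg_sigma | by []]. Qed.

Lemma reach_sub x k l m : reach x (k, l) -> reach x (k, l - a m).
Proof.
move=> H; have := reach_sig _ _ (k - m, 0) H; rewrite zsigE addr0.
by have -> : k - (k - m) = m by ring.
Qed.

Lemma reach_prod x N (c : 'I_N -> 'Z_n) : (forall i, c i \in [set a i | i : 'Z_n]) ->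
  forall k l, reach x (k, l) -> reach x (k, l - (\prod_i c i)%g).
Proof.
elim: N c => [|N IH] c Hc k l H.
  rewrite big_ord0; have -> : (1%g : 'Z_n) = 0 by []. by rewrite subr0.
rewrite big_ord_recr /=.
have e : forall u v : 'Z_n, (u * v)%g = u + v by [].
rewrite e opprD addrA.
have := Hc ord_max; case/imsetP => m _ ->.
apply: reach_sub; apply: IH => // i; exact: Hc.
Qed.

Lemma reach_any x k l l' : reach x (k, l) -> reach x (k, l').
Proof.
move=> H.
have : l - l' \in <<[set a i | i : 'Z_n]>>%g by rewrite hgen inE.
case/gen_prodgP => N [c Hc e].
have := @reach_prod x N c Hc k l H; rewrite -e.
by have -> : l - (l - l') = l' by ring.
Qed.

Lemma reach_succ x k l : reach x (k, l) -> reach x (k + 1, l).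
Proof. move=> H; have := reach_sig _ _ (0, 1) H; rewrite zsigE; exact: reach_any. Qed.

Lemma zr_indec : indecomposable (zr a).
Proof.
move=> [k0 l0] [k l].
have R0 : reach (k0, l0) (k0, l0) by exists id => //; exact: sg_id.
have H : forall t : nat, reach (k0, l0) (k0 + t%:R, l).
  elim=> [|t IH]; first by rewrite addr0; exact: reach_any R0.
  by rewrite mulrSr addrA; apply: reach_succ.
have := H (nat_of_ord (k - k0)); rewrite natr_Zp.
by have -> : k0 + (k - k0) = k by ring.
Qed.
End Indec.

Section Irr.
Variable n : nat.
Variable a : 'Z_n -> 'Z_n.
Hypothesis hnd : forall i : 'Z_n, i != 0 -> exists k : 'Z_n, a (i + k) != a k.

Lemma zr_irr : irretractable (zr a).
Proof.
move=> [i j] [i' j'] ne E.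
have E0 : zsig a (i, j) (0, 0) = zsig a (i', j') (0, 0).
  by have := congr1 (fun h => h (0, 0)) E.
rewrite !zsigE !add0r in E0; case: E0 => ej _; subst j'.
have hd : i' - i != 0.
  by rewrite subr_eq0; apply/eqP => h; apply: ne; rewrite h.
case: (hnd _ hd) => k hk.
have E1 : zsig a (i, j) (i' + k - j, 0) = zsig a (i', j) (i' + k - j, 0).
  by have := congr1 (fun h => h (i' + k - j, 0)) E.
rewrite !zsigE in E1; move/(congr1 snd): E1 => /= E1.
have e1 : i' + k - j + j - i = i' - i + k by ring.
have e2 : i' + k - j + j - i' = k by ring.
rewrite e1 e2 in E1.
by rewrite !sub0r in E1; move/eqP: hk; apply; apply: oppr_inj.
Qed.
End Irr.

Section Simple.
Variable n : nat.
Variable a : 'Z_n -> 'Z_n.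
Local Notation X := ('Z_n * 'Z_n)%type.
Hypothesis hu : forall i : 'Z_n, i != 0 -> (a 0 - a i) \is a GRing.unit.
Variable Y : Type.
Variable f : X -> Y.
Variable g : Y -> Y -> Y.
Hypothesis hom : forall x y, f (zsig a x y) = g (f x) (f y).

Lemma E1 x x' y : f x = f x' -> f (zsig a x y) = f (zsig a x' y).
Proof. by move=> e; rewrite !hom e. Qed.
Lemma E2 x y y' : f y = f y' -> f (zsig a x y) = f (zsig a x y').
Proof. by move=> e; rewrite !hom e. Qed.
Arguments E1 {x x'} y _.
Arguments E2 x {y y'} _.

Lemma cover (u : 'Z_n) (P : 'Z_n -> Prop) l : u \is a GRing.unit ->
  (forall t : nat, P (l + u *+ t)) -> forall l', P l'.
Proof.
move=> U H l'; have := H (nat_of_ord ((l' - l) / u)).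
by rewrite -mulr_natr natr_Zp mulrC divrK // addrC subrK.
Qed.

Lemma fiber_collapse p u : u \is a GRing.unit ->
  (forall l, f (p, l) = f (p, l + u)) -> forall l l', f (p, l) = f (p, l').
Proof.
move=> U H l; apply: (@cover u (fun l' => f (p, l) = f (p, l')) l U).
elim=> [|t IH]; first by rewrite mulr0n addr0.
by rewrite mulrSr addrA IH H.
Qed.

Lemma make_eq p1 q1 p2 q2 : f (p1, q1) = f (p2, q2) -> p1 != p2 ->
  exists q, f (p1, q) = f (p2, q).
Proof.
move=> E ne.
have It : forall t : nat, forall q1 q2, f (p1, q1) = f (p2, q2) ->
    f (p1, q1 - a 0 *+ t) = f (p2, q2 - a (p2 - p1) *+ t).
  elim=> [|t IH] r1 r2 e; first by rewrite !mulr0n !subr0.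
  have := E2 (p1, 0) (IH _ _ e); rewrite !zsigE !addr0 subrr.
  by rewrite !mulrSr !opprD !addrA.
have U : (a 0 - a (p2 - p1)) \is a GRing.unit.
  by apply: hu; rewrite subr_eq0 eq_sym.
set u := a 0 - a (p2 - p1) in U.
set t := nat_of_ord ((q1 - q2) / u).
have hut : u *+ t = q1 - q2 by rewrite -mulr_natr natr_Zp mulrC divrK.
exists (q1 - a 0 *+ t); rewrite (It t _ _ E).
congr (f (_, _)).
rewrite /u mulrnBl in hut.
have e : q1 = q2 + (a 0 *+ t - a (p2 - p1) *+ t) by rewrite hut; ring.
rewrite e; ring.
Qed.

Lemma caseA p1 p2 q : f (p1, q) = f (p2, q) -> p1 != p2 -> forall x, f x = f (0, 0).
Proof.
move=> E ne.
have H1 : forall l, f (p1, l) = f (p1, l + (a 0 - a (p1 - p2))).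
  move=> l; have := E1 (p1 - q, l + a 0) E; rewrite !zsigE.
  have -> : p1 - q + q = p1 by ring.
  rewrite subrr addrK => ->; congr (f (_, _)); ring.
have U : (a 0 - a (p1 - p2)) \is a GRing.unit by apply: hu; rewrite subr_eq0.
have Hf := fiber_collapse _ _ U H1.
have Hall : forall k l l', f (k, l) = f (k, l').
  move=> k l l'; have := E2 (0, k - p1) (Hf (l + a (k - 0)) (l' + a (k - 0))).
  rewrite !zsigE; have -> : p1 + (k - p1) = k by ring.
  by rewrite !addrK.
have Hstep : forall k l l', f (k, l) = f (k + 1, l').
  move=> k l l'; have := E1 (k, l) (Hf 0 1); rewrite !zsigE addr0 => e.
  by rewrite (Hall k l (l - a (k - p1))) e; apply: Hall.
have Hn : forall t : nat, forall l, f (t%:R, l) = f (0, 0).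
  elim=> [|t IH] l; first exact: Hall.
  by rewrite mulrSr -(Hstep _ 0) IH.
move=> [k l]; have := Hn (nat_of_ord k) l; by rewrite natr_Zp.
Qed.

Lemma collapse : (exists x x', x <> x' /\ f x = f x') -> forall x, f x = f (0, 0).
Proof.
move=> [[p1 q1] [[p2 q2] [ne E]]].
case: (eqVneq p1 p2) => [ep|hp].
  subst p2.
  have hq : q1 != q2 by apply/eqP => h; apply: ne; rewrite h.
  have := E1 (0, 0) E; rewrite !zsigE !add0r => E'.
  have [q Eq] := make_eq _ _ _ _ E' hq.
  exact: caseA _ _ _ Eq hq.
have [q Eq] := make_eq _ _ _ _ E hp.
exact: caseA _ _ _ Eq hp.
Qed.
End Simple.

Lemma zr_simple n (a : 'Z_n -> 'Z_n)
  (hu : forall i : 'Z_n, i != 0 -> (a 0 - a i) \is a GRing.unit) :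
  simple_solution (zr a).
Proof.
split.
  exists (0, 0), (0, 1) => -[] /esym /eqP; by rewrite oner_eq0.
move=> Y s f _ Hhom Hsurj.
have hom : forall x y, f (zsig a x y) = ysigma s (f x) (f y) by exact: Hhom.
case: (classic (exists x x', x <> x' /\ f x = f x')) => [Hc|Hno].
  right; exists (f (0, 0)) => y; have [x <-] := Hsurj y.
  exact: (@collapse n a hu Y f _ hom Hc).
left.
have inj : forall x x', f x = f x' -> x = x'.
  by move=> x x' e; apply: NNPP => ne; apply: Hno; exists x, x'.
exists (fun y => proj1_sig (constructive_indefinite_description _ (Hsurj y))).
  move=> x; apply: inj.
  by case: (constructive_indefinite_description _ _).
move=> y; by case: (constructive_indefinite_description _ _).
Qed.

Theorem mainTheorem6 (n : nat) (hn : (1 < n)%N) (a : 'Z_n -> 'Z_n)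
  (hsym : forall i : 'Z_n, a i = a (- i))
  (hnd : forall i : 'Z_n, i != 0 -> exists k : 'Z_n, a (i + k) != a k)
  (hgen : (<<[set a i | i : 'Z_n]>>)%g = [set: 'Z_n]) :
  (is_solution (zr a) /\ indecomposable (zr a) /\ irretractable (zr a)) /\
  ((forall i : 'Z_n, i != 0 -> (a 0 - a i) \is a GRing.unit) ->
     simple_solution (zr a)).
Proof.
split; last exact: zr_simple.
split; first exact: zr_sol.
split; [exact: zr_indec | exact: zr_irr].
Qed.
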